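(* For the fractional scheduling problem without payments of a single task on $n$ machines, the proportional mechanism has approximation ratio $1$. When the proportional mechanism is run independently for each of $m$ tasks, its approximation ratio (for the fractional makespan) is at least $m$.
   Context: Fractional scheduling without payments: $n$ machines, $m$ divisible tasks; machine $i$ has private true times $t_{i,j}>0$ and declares $\hat t_{i,j}>0$. A mechanism outputs fractions $\alpha_{i,j}\in[0,1]$ with $\sum_i\alpha_{i,j}=1$ for each task $j$. Machines are bound by their declarations: machine $i$'s cost is $C_i=\sum_j\alpha_{i,j}\max\{\hat t_{i,j},t_{i,j}\}$ and the fractional makespan is $\max_iC_i$. The proportional mechanism for a single task with declarations $\hat t_1,\dots,\hat t_n$ gives machine $i$ the fraction $\alpha_i=\hat t_i^{-1}/\sum_{k=1}^n\hat t_k^{-1}$; for $m$ tasks it does this separately for each task $j$ using the declarations $\hat t_{1,j},\dots,\hat t_{n,j}$. (This mechanism is truthful.) The approximation ratio is the supremum over true instances $\mathbf t$ of the fractional makespan under truthful reports $\hat{\mathbf t}=\mathbf t$ divided by the optimal fractional makespan $\min_\alpha\max_i\sum_j\alpha_{i,j}t_{i,j}$. *)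

(* Defs.v *)
From HB Require Import structures.
From mathcomp Require Import all_boot all_order all_algebra.
From mathcomp Require Import all_classical all_reals ereal.
Set Implicit Arguments. Unset Strict Implicit. Unset Printing Implicit Defensive.
Import Order.TTheory GRing.Theory Num.Theory.
Local Open Scope ring_scope.
Local Open Scope classical_set_scope.

(* Fractional scheduling: n machines ('I_n), m divisible tasks ('I_m).
   A (true or declared) instance is a matrix of processing times t i j. *)
Definition instance (R : realType) (n m : nat) := 'I_n -> 'I_m -> R.

Definition pos_instance (R : realType) (n m : nat) (t : instance R n m) : Prop :=
  forall i j, 0 < t i j.

Definition feasible (R : realType) (n m : nat) (a : 'I_n -> 'I_m -> R) : Prop :=
  (forall i j, 0 <= a i j <= 1) /\ (forall j, \sum_(i < n) a i j = 1).

(* cost of machine i, bound by its declarations th, with true times t *)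
Definition cost (R : realType) (n m : nat) (th t : instance R n m)
    (a : 'I_n -> 'I_m -> R) (i : 'I_n) : R :=
  \sum_(j < m) a i j * Num.max (th i j) (t i j).

Definition makespan (R : realType) (n m : nat) (th t : instance R n m)
    (a : 'I_n -> 'I_m -> R) : R :=
  \big[Num.max/0]_(i < n) cost th t a i.

(* optimal fractional makespan: min over feasible allocations of
   max_i sum_j a i j * t i j (the minimum is attained; we write it as inf) *)
Definition opt (R : realType) (n m : nat) (t : instance R n m) : R :=
  inf [set makespan t t a | a in [set a | feasible a]].

Definition proportional (R : realType) (n m : nat) (th : instance R n m)
    : 'I_n -> 'I_m -> R :=
  fun i j => (th i j)^-1 / \sum_(k < n) (th k j)^-1.

Definition prop_ratio (R : realType) (n m : nat) (t : instance R n m) : R :=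
  makespan t t (proportional t) / opt t.

Definition prop_approx_ratio (R : realType) (n m : nat) : \bar R :=
  ereal_sup [set (prop_ratio t)%:E | t in [set t : instance R n m | pos_instance t]].

(* Main.v *)
Require Import Defs.
From HB Require Import structures.
From mathcomp Require Import all_boot all_order all_algebra.
From mathcomp Require Import all_classical all_reals ereal.
From mathcomp Require Import ring lra.
Import Order.TTheory GRing.Theory Num.Theory.
Set Implicit Arguments. Unset Strict Implicit.
Local Open Scope ring_scope.

Section Aux.
Variable R : realType.

Definition S_ (n m : nat) (t : instance R n m) (j : 'I_m) : R :=
  \sum_(k < n) (t k j)^-1.

Lemma S_gt0 n m (t : instance R n m) j (i : 'I_n) :
  pos_instance t -> 0 < S_ t j.
Proof.
move=> tp; rewrite /S_ (bigD1 i) //=.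
apply: (lt_le_trans _ (_ : (t i j)^-1 <= _)); first by rewrite invr_gt0.
rewrite lerDl; apply: sumr_ge0 => k _; rewrite invr_ge0; exact: ltW.
Qed.

Lemma term_le_S n m (t : instance R n m) j (i : 'I_n) :
  pos_instance t -> (t i j)^-1 <= S_ t j.
Proof.
move=> tp; rewrite /S_ (bigD1 i) //= lerDl; apply: sumr_ge0 => k _.
rewrite invr_ge0; exact: ltW.
Qed.

Lemma makespan_ge0 n m (th t : instance R n m) a : 0 <= makespan th t a.
Proof.
rewrite /makespan; elim/big_rec: _ => //= i x _ hx.
by rewrite le_max hx orbT.
Qed.

Lemma cost_le_makespan n m (th t : instance R n m) a i :
  cost th t a i <= makespan th t a.
Proof. exact: (le_bigmax 0 (fun i => cost th t a i) i). Qed.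

Lemma makespan_lb n m (t : instance R n m) a j :
  pos_instance t -> feasible a -> (S_ t j)^-1 <= makespan t t a.
Proof.
move=> tp [a01 asum].
have i0 : 'I_n.
  case: n t a tp a01 asum => [|n'] t a tp a01 asum; last exact: ord0.
  by move: (asum j); rewrite big_ord0 => /eqP; rewrite eq_sym oner_eq0.
set M := makespan t t a.
have h i : a i j <= M * (t i j)^-1.
  have tij := tp i j.
  rewrite -(ler_pM2r tij) -mulrA mulVf ?gt_eqF // mulr1.
  apply: le_trans (cost_le_makespan t t a i).
  rewrite /cost (bigD1 j) //= maxxx lerDl; apply: sumr_ge0 => k _.
  rewrite maxxx; apply: mulr_ge0; [by case/andP: (a01 i k) | exact: ltW].
have Sp := S_gt0 j i0 tp.
have : 1 <= M * S_ t j.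
  rewrite -(asum j) /S_ mulr_sumr; exact: ler_sum.
move=> h1; rewrite -(ler_pM2r Sp) mulVf ?gt_eqF //.
Qed.

Lemma prop_feasible n m (t : instance R n m) :
  (0 < n)%N -> pos_instance t -> feasible (proportional t).
Proof.
move=> n0 tp; have i0 : 'I_n := Ordinal n0.
split=> [i j|j].
  have Sp := S_gt0 j i0 tp; rewrite /proportional; apply/andP; split.
    by apply: divr_ge0; [rewrite invr_ge0; exact: ltW | exact: ltW].
  rewrite ler_pdivrMr // mul1r; exact: term_le_S.
rewrite /proportional -mulr_suml; apply: mulfV; rewrite gt_eqF //.
exact: (S_gt0 j i0 tp).
Qed.

Lemma prop_cost n m (t : instance R n m) i :
  pos_instance t -> cost t t (proportional t) i = \sum_(j < m) (S_ t j)^-1.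
Proof.
move=> tp; apply: eq_bigr => j _; rewrite maxxx /proportional /S_.
have := tp i j => h; rewrite mulrC mulrA divff ?gt_eqF // mul1r.
by [].
Qed.

Lemma prop_makespan n m (t : instance R n m) :
  (0 < n)%N -> pos_instance t ->
  makespan t t (proportional t) = \sum_(j < m) (S_ t j)^-1.
Proof.
move=> n0 tp; have i0 : 'I_n := Ordinal n0.
apply/le_anti/andP; split.
  rewrite /makespan; apply: bigmax_le.
    apply: sumr_ge0 => j _; rewrite invr_ge0; exact: ltW (S_gt0 j i0 tp).
  by move=> i _; rewrite prop_cost.
by rewrite -(prop_cost i0 tp); exact: cost_le_makespan.
Qed.

Lemma opt_lb n m (t : instance R n m) j :
  (0 < n)%N -> pos_instance t -> (S_ t j)^-1 <= opt t.
Proof.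
move=> n0 tp; apply: lb_le_inf.
  by exists (makespan t t (proportional t)); exists (proportional t) => //; exact: prop_feasible.
by move=> x [a fa <-]; exact: makespan_lb.
Qed.

Lemma opt_ub n m (t : instance R n m) a :
  feasible a -> opt t <= makespan t t a.
Proof.
move=> fa; apply: ge_inf; last by exists a.
by exists 0 => x [b _ <-]; exact: makespan_ge0.
Qed.

End Aux.


Lemma ratio1 (R : realType) n (t : instance R n 1) :
  (0 < n)%N -> pos_instance t -> prop_ratio t = 1.
Proof.
move=> n0 tp; have i0 : 'I_n := Ordinal n0.
rewrite /prop_ratio prop_makespan // big_ord1.
have -> : opt t = (S_ t ord0)^-1.
  apply/le_anti/andP; split; last exact: opt_lb.
  apply: le_trans (opt_ub t (prop_feasible n0 tp)) _.
  by rewrite prop_makespan // big_ord1.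
by rewrite divff // invr_eq0 gt_eqF // (S_gt0 ord0 i0 tp).
Qed.

Section Diag.
Variables (R : realType) (n m : nat) (le_mn : (m <= n)%N) (K : R) (K0 : 0 < K).

Definition tK : instance R n m := fun i j => if val i == val j then 1 else K.
Definition dK : 'I_n -> 'I_m -> R := fun i j => if val i == val j then 1 else 0.

Lemma tK_pos : pos_instance tK.
Proof. by move=> i j; rewrite /tK; case: ifP. Qed.

Lemma sum_dK j : \sum_(i < n) dK i j = 1.
Proof.
rewrite (bigD1 (widen_ord le_mn j)) //= /dK eqxx big1 ?addr0 // => i ne.
rewrite ifF //; apply/negbTE; apply: contra ne => /eqP h.
by apply/eqP/val_inj.
Qed.

Lemma dK_feasible : feasible dK.
Proof.
split; last exact: sum_dK.
by move=> i j; rewrite /dK; case: ifP => _; rewrite ?lexx ?ler01.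
Qed.

Lemma makespan_dK : makespan tK tK dK <= 1.
Proof.
rewrite /makespan; apply: bigmax_le => // i _.
rewrite /cost; under eq_bigr => j _ do rewrite maxxx /dK /tK.
have e j : (if val i == val j then 1 else 0) * (if val i == val j then 1 else K)
   = (if val i == val j then 1 else 0 : R).
  by case: ifP; rewrite ?mul1r ?mul0r.
under eq_bigr => j _ do rewrite e.
case: (ltnP i m) => h.
  rewrite (bigD1 (Ordinal h)) //= eqxx big1 ?addr0 // => j ne.
  rewrite ifF //; apply/negbTE; apply: contra ne => /eqP hh.
  by apply/eqP/val_inj => /=.
rewrite big1 // => j _; rewrite ifF //; apply/negbTE.
by rewrite neq_ltn (leq_trans (ltn_ord j) h) orbT.
Qed.

Definition BK := 1 + K^-1 *+ n.

Lemma S_tK j : S_ tK j <= BK.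
Proof.
rewrite /S_ /BK -(sum_dK j).
have -> : K^-1 *+ n = \sum_(i < n) K^-1 by rewrite sumr_const card_ord.
rewrite -big_split /=.
apply: ler_sum => i _; rewrite /tK /dK; case: ifP => _.
  by rewrite invr1 lerDl invr_ge0 ltW.
by rewrite add0r.
Qed.

Lemma BK_gt0 : 0 < BK.
Proof.
rewrite /BK; apply: (lt_le_trans ltr01); rewrite lerDl.
by apply: mulrn_wge0; rewrite invr_ge0 ltW.
Qed.

Lemma ratio_tK : (0 < m)%N -> BK^-1 *+ m <= prop_ratio tK.
Proof.
move=> m0.
have n0 : (0 < n)%N := leq_trans m0 le_mn.
have i0 : 'I_n := Ordinal n0.
have j0 : 'I_m := Ordinal m0.
have tp := tK_pos.
rewrite /prop_ratio prop_makespan //.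
set C := \sum_(j < m) _.
have C1 : BK^-1 *+ m <= C.
  have -> : BK^-1 *+ m = \sum_(j < m) BK^-1 by rewrite sumr_const card_ord.
  apply: ler_sum => j _.
  rewrite lef_pV2 ?posrE ?BK_gt0 ?(S_gt0 j i0 tp) //; exact: S_tK.
have C0 : 0 <= C by apply: sumr_ge0 => j _; rewrite invr_ge0 ltW // (S_gt0 j i0 tp).
have o0 : 0 < opt tK.
  apply: lt_le_trans (opt_lb j0 n0 tp); rewrite invr_gt0; exact: (S_gt0 j0 i0 tp).
have o1 : opt tK <= 1 := le_trans (opt_ub tK dK_feasible) makespan_dK.
apply: le_trans C1 _; rewrite ler_pdivlMr //.
by rewrite -{2}[C]mulr1 ler_wpM2l.
Qed.

End Diag.

Theorem theorem7 (R : realType) :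
  (forall n : nat, (0 < n)%N -> prop_approx_ratio R n 1 = 1%:E) /\
  (forall n m : nat, (0 < m)%N -> (m <= n)%N ->
     ((m%:R : R)%:E <= prop_approx_ratio R n m)%E).
Proof.
split.
  move=> n n0; rewrite /prop_approx_ratio.
  apply/le_anti/andP; split.
    by apply: ge_ereal_sup => x [t tp <-]; rewrite ratio1.
  apply: ereal_sup_ubound; exists (fun _ _ => 1).
    by move=> i j; rewrite ltr01.
  by rewrite ratio1 // => i j; rewrite ltr01.
move=> n m m0 le_mn.
have ub (K : R) : 0 < K -> (((BK n K)^-1 *+ m)%:E <= prop_approx_ratio R n m)%E.
  move=> K0; apply: (le_trans _ (ereal_sup_ubound _)); last first.
    by exists (@tK R n m K); [exact: tK_pos|].
  by rewrite lee_fin; exact: ratio_tK.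
rewrite leNgt; apply/negP => hlt.
move: (ub 1 ltr01) hlt.
case E: (prop_approx_ratio R n m) => [r| |] //=.
rewrite lte_fin => _ hr.
set M : R := m%:R; set N : R := n%:R.
have d0 : 0 < M - r by rewrite subr_gt0.
have N0 : 0 <= N by rewrite /N ler0n.
pose K := (M * N + 1) / (M - r).
have MN0 : 0 < M * N + 1.
  by apply: (lt_le_trans ltr01); rewrite lerDr mulr_ge0 // ler0n.
have K0 : 0 < K by rewrite divr_gt0.
have := ub K K0; rewrite E lee_fin /BK -[K^-1 *+ n]mulr_natr -[_^-1 *+ m]mulr_natr -/N -/M.
have -> : K^-1 = (M - r) / (M * N + 1) by rewrite invf_div.
set k := (M - r) / (M * N + 1).
have k0 : 0 < k by rewrite divr_gt0.
have hk : k * (M * N + 1) = M - r by rewrite /k divfK // gt_eqF.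
have B0 : 0 < 1 + k * N by apply: (lt_le_trans ltr01); rewrite lerDl mulr_ge0 // ltW.
rewrite mulrC ler_pdivrMr // => h.
have h2 : k * (M * N + 1) <= r * k * N.
  rewrite hk; move: h; rewrite mulrDr mulr1 -mulrA => h; lra.
have h3 : k * (N * (M - r) + 1) <= 0.
  have -> : k * (N * (M - r) + 1) = k * (M * N + 1) - r * k * N by ring.
  by rewrite subr_le0.
have : 0 < k * (N * (M - r) + 1).
  by rewrite mulr_gt0 // ltr_wpDl // mulr_ge0 // ltW.
by rewrite ltNge h3.
Qed.
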